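(* Let $k\ge 2$ be an integer. Then $S_{3,2}(k;k)=k^2-k-1$.
   Context: Let $k,r$ be positive integers with $r\mid k$. A solution to $\mathcal{E}$ is a $k$-tuple $(x_1,\dots,x_k)$ of positive integers (not necessarily distinct) with $\sum_{i=1}^{k-1}x_i=x_k$; it lies in $[1,n]$ if all $x_i\in\{1,\dots,n\}$. Given a coloring $\chi$ of $[1,n]$ with colors in $\{0,1\}$ (viewed as integers), a solution is $r$-zero-sum if $\sum_{i=1}^k\chi(x_i)\equiv 0\pmod r$. $S_{3,2}(k;r)$ denotes the least positive integer $n$ such that every coloring $\chi:[1,n]\to\{0,1\}$ admits an $r$-zero-sum solution to $\mathcal{E}$ in $[1,n]$. *)

(* Defs.v *)
From mathcomp Require Import all_boot.
Set Implicit Arguments. Unset Strict Implicit. Unset Printing Implicit Defensive.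

(* Colors are chi : nat -> bool (values
   outside [1,n] are irrelevant), viewed as 0/1 integers. *)
Definition solution_in (k n : nat) (x : 'I_k -> nat) : Prop :=
  (forall i, 1 <= x i <= n) /\
  \sum_(i < k | (i : nat) < k.-1) x i = \sum_(i < k | (i : nat) == k.-1) x i.

Definition zero_sum (r k : nat) (chi : nat -> bool) (x : 'I_k -> nat) : Prop :=
  r %| \sum_(i < k) nat_of_bool (chi (x i)).

Definition good (k r n : nat) : Prop :=
  forall chi : nat -> bool,
    exists x : 'I_k -> nat, solution_in n x /\ zero_sum r chi x.

Definition is_S32 (k r n : nat) : Prop :=
  0 < n /\ good k r n /\ forall m, 0 < m -> m < n -> ~ good k r m.

(* Main.v *)
Require Import Defs.
From mathcomp Require Import all_boot zify.

Lemma sum_first (n : nat) (F : 'I_n.+2 -> nat) :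
  \sum_(i < n.+2 | (i:nat) < n.+1) F i = \sum_(i < n.+1) F (widen_ord (leqnSn _) i).
Proof.
rewrite big_mkcond big_ord_recr /= ltnn addn0.
by apply: eq_bigr => i _; rewrite /= ltn_ord.
Qed.

Lemma sum_last (n : nat) (F : 'I_n.+2 -> nat) :
  \sum_(i < n.+2 | (i:nat) == n.+1) F i = F ord_max.
Proof.
rewrite big_mkcond big_ord_recr /= eqxx big1 // => i _.
by rewrite /= ltn_eqF.
Qed.

Lemma sum_lb1 (m : nat) (F : 'I_m -> nat) (j : 'I_m) :
  (forall i, 1 <= F i) -> F j + m.-1 <= \sum_(i < m) F i.
Proof.
move=> H; rewrite (bigD1 j) //= leq_add2l.
apply: leq_trans (_ : \sum_(i | i != j) 1 <= _).
  by rewrite sum_nat_const cardC1 card_ord muln1.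
by apply: leq_sum => i _; exact: H.
Qed.

Lemma zs_mono k chi (x : 'I_k -> nat) : 0 < k -> zero_sum k chi x ->
  (forall i, chi (x i) = false) \/ (forall i, chi (x i) = true).
Proof.
rewrite /zero_sum => k0 hd.
set s := \sum_(i < k) _ in hd.
have hs : s <= k.
  apply: leq_trans (_ : \sum_(i < k) 1 <= _).
    by apply: leq_sum => i _; case: (chi _).
  by rewrite sum_nat_const card_ord muln1.
have [s0|sp] := posnP s.
  left => i; move: s0; rewrite /s (bigD1 i) //=.
  by case: (chi (x i)).
have sk : s = k by apply/eqP; rewrite eqn_leq hs (dvdn_leq sp hd).
right => i; apply/negbFE/negP => /negP hi.
move: sk; rewrite /s (bigD1 i) //= (negbTE hi) add0n => e.
have : \sum_(j | j != i) nat_of_bool (chi (x j)) <= k.-1.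
  apply: leq_trans (_ : \sum_(j | j != i) 1 <= _).
    by apply: leq_sum => j _; case: (chi _).
  by rewrite sum_nat_const cardC1 card_ord muln1.
rewrite e; lia.
Qed.

Lemma mono_zs k chi (x : 'I_k -> nat) b :
  (forall i, chi (x i) = b) -> zero_sum k chi x.
Proof.
move=> H; rewrite /zero_sum (eq_bigr (fun _ => nat_of_bool b)); last by move=> i _; rewrite H.
by rewrite sum_nat_const card_ord dvdn_mulr.
Qed.

Definition mk (n L a c : nat) : 'I_n.+2 -> nat :=
  fun i => if (i:nat) == n.+1 then L else if (i:nat) == 0 then a else c.

Lemma mk_sol n N L a c : a + n * c = L -> 1 <= a <= N -> 1 <= L <= N ->
  (0 < n -> 1 <= c <= N) -> solution_in N (mk n L a c).
Proof.
move=> e ha hL hc; split.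
  move=> i; rewrite /mk; case: ifP => // /negbT i1; case: ifP => // /negbT i0.
  apply: hc; have := ltn_ord i; lia.
rewrite /= sum_first sum_last /mk /= big_ord_recl /=.
rewrite (eq_bigr (fun _ => c)); last first.
  move=> i _; rewrite /= /bump /= add1n eqSS ltn_eqF //.
rewrite sum_nat_const card_ord.
by rewrite eqxx.
Qed.

Lemma mk_mono n L a c (chi : nat -> bool) b : chi a = b -> chi L = b -> chi c = b ->
  zero_sum n.+2 chi (mk n L a c).
Proof.
move=> h1 h2 h3; apply: (@mono_zs _ _ _ b) => i; rewrite /mk.
by case: ifP => // _; case: ifP.
Qed.

Lemma neqb (x y : bool) : x != y -> x = ~~ y.
Proof. by case: x; case: y. Qed.

Lemma upper n : good n.+2 n.+2 (n * n + 3 * n + 1).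
Proof.
move=> chi; set N := _ + 1.
have [h1|/neqb h1] := boolP (chi n.+1 == chi 1).
  exists (mk n n.+1 1 1); split; last by apply: mk_mono => //; apply/eqP.
  apply: mk_sol; rewrite /N; lia.
have [/eqP h2|/neqb h2] := boolP (chi (n.+1 * n.+1) == ~~ chi 1).
  exists (mk n (n.+1 * n.+1) n.+1 n.+1); split.
    apply: mk_sol; rewrite /N; lia.
  by apply: (@mk_mono _ _ _ _ _ (~~ chi 1)).
rewrite negbK in h2.
have [/eqP h3|/neqb h3] := boolP (chi n.+2 == chi 1).
  exists (mk n (n.+1 * n.+1) 1 n.+2); split.
    apply: mk_sol; rewrite /N; lia.
  by apply: (@mk_mono _ _ _ _ _ (chi 1)).
have [/eqP h4|/neqb h4] := boolP (chi N == ~~ chi 1).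
  exists (mk n N n.+1 n.+2); split.
    apply: mk_sol; rewrite /N; lia.
  by apply: (@mk_mono _ _ _ _ _ (~~ chi 1)).
rewrite negbK in h4.
exists (mk n N (n.+1 * n.+1) 1); split.
  apply: mk_sol; rewrite /N; lia.
by apply: (@mk_mono _ _ _ _ _ (chi 1)).
Qed.

Lemma lower n m : 0 < m -> m < n * n + 3 * n + 1 -> ~ good n.+2 n.+2 m.
Proof.
move=> m0 mN /(_ (fun v => (n.+1 <= v) && (v < n.+1 * n.+1))) [x [[hb /= he] hz]].
rewrite sum_first sum_last in he.
set S := \sum_(i < n.+1) _ in he.
have hL := hb ord_max.
case: (@zs_mono _ _ _ (ltn0Sn _) hz) => hall.
- have hmL := hall ord_max.
  have [j /= hj | hn] := pickP (fun j : 'I_n.+1 => n.+1 * n.+1 <= x (widen_ord (leqnSn _) j)).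
    have := @sum_lb1 n.+1 (fun i => x (widen_ord (leqnSn _) i)) j (fun i => proj1 (andP (hb (widen_ord (leqnSn _) i)))).
    rewrite -/S he /=; lia.
  have hs : forall i : 'I_n.+1, x (widen_ord (leqnSn _) i) <= n.
    move=> i; have := hall (widen_ord (leqnSn _) i); have := hn i => /= h1 h2.
    have := hb (widen_ord (leqnSn _) i); move: h1 h2. lia.
  have ub : S <= n.+1 * n.
    apply: leq_trans (_ : \sum_(i < n.+1) n <= _); first by apply: leq_sum => i _; exact: hs.
    by rewrite sum_nat_const card_ord.
  have := @sum_lb1 n.+1 (fun i => x (widen_ord (leqnSn _) i)) ord0 (fun i => proj1 (andP (hb (widen_ord (leqnSn _) i)))).
  rewrite -/S he; move: hmL ub (hb (widen_ord (leqnSn _) ord0)); rewrite he; lia.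
- have hmL := hall ord_max.
  have lb : n.+1 * n.+1 <= S.
    apply: leq_trans (_ : \sum_(i < n.+1) n.+1 <= _).
      by rewrite sum_nat_const card_ord.
    apply: leq_sum => i _; have := hall (widen_ord (leqnSn _) i); lia.
  move: hmL; rewrite -he; lia.
Qed.

Theorem mainTheorem6 (k : nat) (hk : 2 <= k) : is_S32 k k (k ^ 2 - k - 1).
Proof.
case: k hk => [|[|n]] // _.
have -> : n.+2 ^ 2 - n.+2 - 1 = n * n + 3 * n + 1 by rewrite -mulnn; lia.
split; first by lia.
split; first exact: upper.
by move=> m m0 mN; apply: lower.
Qed.
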